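(* Let $M$ be a finite monoid and $k$ a field. If there exist two irreducible elements $p,q\in M$ that are not associates, then the monoid algebra $kM$ is of infinite representation type.
   Context: A non-unit $p$ in a monoid $M$ is irreducible if whenever $p=ab$ with $a,b\in M$, then $a$ is a unit or $b$ is a unit. Two elements $a,b\in M$ are associates if there exist units $u,v\in M$ with $a=ubv$. A finite-dimensional $k$-algebra is of infinite representation type if it has infinitely many isomorphism classes of finite-dimensional indecomposable modules. *)

(* Defs.v *)
From HB Require Import structures.
From mathcomp Require Import all_boot all_order all_algebra.
Set Implicit Arguments. Unset Strict Implicit. Unset Printing Implicit Defensive.
Import GRing.Theory.
Local Open Scope ring_scope.

Definition is_monoid (M : Type) (mul : M -> M -> M) (one : M) : Prop :=
  [/\ associative mul, left_id one mul & right_id one mul].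

Definition munit (M : Type) (mul : M -> M -> M) (one : M) (u : M) : Prop :=
  exists v, mul u v = one /\ mul v u = one.

Definition mirreducible (M : Type) (mul : M -> M -> M) (one : M) (p : M) : Prop :=
  ~ munit mul one p /\
  forall a b, p = mul a b -> munit mul one a \/ munit mul one b.

Definition massociates (M : Type) (mul : M -> M -> M) (one : M) (a b : M) : Prop :=
  exists u v, munit mul one u /\ munit mul one v /\ a = mul (mul u b) v.

(* Finite-dimensional (left) modules over the monoid algebra kM, given as
   matrix representations of M on row vectors k^n: a . v := v *m rho a.
   For this to be a LEFT action, rho must be an anti-morphism:
   rho (a b) = rho b *m rho a, and rho 1 = 1. *)
Definition is_mrepr (k : fieldType) (M : Type) (mul : M -> M -> M) (one : M)
  (n : nat) (rho : M -> 'M[k]_n) : Prop :=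
  rho one = 1%:M /\ forall a b, rho (mul a b) = rho b *m rho a.

Record mrepr (k : fieldType) (M : Type) (mul : M -> M -> M) (one : M) := MRepr {
  mr_dim : nat;
  mr_map : M -> 'M[k]_mr_dim;
  mr_ok : is_mrepr mul one mr_map }.

Definition mrepr_iso (k : fieldType) (M : Type) (mul : M -> M -> M) (one : M)
  (r s : mrepr k mul one) : Prop :=
  exists (P : 'M[k]_(mr_dim r, mr_dim s)),
    row_free P /\ row_full P /\ forall a, mr_map r a *m P = P *m mr_map s a.

Definition mstable (k : fieldType) (M : Type) (mul : M -> M -> M) (one : M)
  (r : mrepr k mul one) (U : 'M[k]_(mr_dim r)) : Prop :=
  forall a, (U *m mr_map r a <= U)%MS.

Definition mindecomposable (k : fieldType) (M : Type) (mul : M -> M -> M) (one : M)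
  (r : mrepr k mul one) : Prop :=
  (0 < mr_dim r)%N /\
  (forall U W : 'M[k]_(mr_dim r), mstable U -> mstable W ->
    (U :&: W == (0 : 'M[k]_(mr_dim r)))%MS -> (U + W == (1%:M : 'M[k]_(mr_dim r)))%MS ->
    (U == (0 : 'M[k]_(mr_dim r)))%MS \/ (W == (0 : 'M[k]_(mr_dim r)))%MS).

(* Infinite representation type: infinitely many isomorphism classes of
   finite-dimensional indecomposable modules, i.e. any finite list of them
   misses some indecomposable module up to isomorphism. *)
Definition infinite_rep_type (k : fieldType) (M : Type) (mul : M -> M -> M) (one : M) : Prop :=
  forall s : seq (mrepr k mul one),
    exists r : mrepr k mul one,
      mindecomposable r /\ forall i, (i < size s)%N -> ~ mrepr_iso r (nth r s i).

(* Main.v *)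
Require Import Defs.
From mathcomp Require Import all_boot all_order all_algebra.
From Stdlib Require Import Classical ClassicalEpsilon.
Set Implicit Arguments. Unset Strict Implicit. Unset Printing Implicit Defensive.
Import GRing.Theory.

Section Mon.
Variables (M : finType) (mul : M -> M -> M) (one : M).
Hypothesis HM : is_monoid mul one.
Local Notation unit := (munit mul one).
Local Notation assoc := (massociates mul one).

Let mA : associative mul. Proof. by case: HM. Qed.
Let m1l : left_id one mul. Proof. by case: HM. Qed.
Let m1r : right_id one mul. Proof. by case: HM. Qed.

Lemma unit_one : unit one.
Proof. by exists one; rewrite m1l. Qed.

Lemma unit_mul u v : unit u -> unit v -> unit (mul u v).
Proof.
move=> [u' [h1 h2]] [v' [h3 h4]]; exists (mul v' u'); split.
  by rewrite -mA (mA v) h3 m1l.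
by rewrite -mA (mA u') h2 m1l.
Qed.

Lemma right_inv_unit a r : mul a r = one -> unit a.
Proof.
move=> har.
have inj : injective (mul r).
  move=> x y e; by rewrite -(m1l x) -(m1l y) -har -!mA e.
have [g fg gf] := injF_bij inj.
have e : a = g one.
  by rewrite -(m1r a) -{1}(gf one) mA har m1l.
by exists r; split => //; rewrite e gf.
Qed.

Lemma unit_mul_inv a b : unit (mul a b) -> unit a /\ unit b.
Proof.
move=> [c [h1 h2]].
have ua : unit a by apply: (@right_inv_unit a (mul b c)); rewrite mA.
split => //.
case: (ua) => a' [ha1 ha2].
have -> : b = mul a' (mul a b) by rewrite mA ha2 m1l.
by apply: unit_mul; [exists a | exists c].
Qed.

Lemma assoc_mull u b c : unit u -> (assoc (mul u b) c <-> assoc b c).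
Proof.
move=> uu; case: (uu) => u' [h1 h2]; split.
  move=> [x [y [ux [uy e]]]]; exists (mul u' x), y; split; [|split] => //.
    apply: unit_mul => //; by exists u.
  by rewrite -(m1l b) -h2 -mA e !mA.
move=> [x [y [ux [uy e]]]]; exists (mul u x), y; split; [|split] => //.
  exact: unit_mul.
by rewrite e !mA.
Qed.

Lemma assoc_mulr u b c : unit u -> (assoc (mul b u) c <-> assoc b c).
Proof.
move=> uu; case: (uu) => u' [h1 h2]; split.
  move=> [x [y [ux [uy e]]]]; exists x, (mul y u'); split; [|split] => //.
    apply: unit_mul => //; by exists u.
  by rewrite -(m1r b) -h1 mA e !mA.
move=> [x [y [ux [uy e]]]]; exists x, (mul y u); split; [|split] => //.
  exact: unit_mul.
by rewrite e !mA.
Qed.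

Lemma assoc_refl a : assoc a a.
Proof. exists one, one; do !split; try exact: unit_one; by rewrite m1l m1r. Qed.

Lemma assoc_sym a b : assoc a b -> assoc b a.
Proof.
move=> [x [y [[x' [hx1 hx2]] [[y' [hy1 hy2]] e]]]].
exists x', y'; split; [|split]; try (by [exists x| exists y]).
by rewrite e -(mA x) (mA x') hx2 m1l -mA hy1 m1r.
Qed.

Lemma irr_assoc_prod a b p : mirreducible mul one p -> ~ unit a -> ~ unit b ->
  ~ assoc (mul a b) p.
Proof.
move=> [_ hp] na nb [x [y [[x' [hx1 hx2]] [[y' [hy1 hy2]] e]]]].
have ep : p = mul (mul x' a) (mul b y').
  by rewrite mA -(mA x' a b) e !mA hx2 m1l -mA hy1 m1r.
case: (hp _ _ ep) => h.
  apply: na; have -> : a = mul x (mul x' a) by rewrite mA hx1 m1l.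
  by apply: unit_mul => //; exists x'.
apply: nb; have -> : b = mul (mul b y') y by rewrite -mA hy2 m1r.
by apply: unit_mul => //; exists y'.
Qed.

End Mon.
Local Open Scope ring_scope.

Section Mx.
Variables (k : fieldType) (m : nat).
Local Notation n := m.+1.

Definition Nsh : 'M[k]_n := \matrix_(i, j) ((i : nat) == j.+1)%:R.
Definition Xm : 'M[k]_(n + n) := block_mx 0 1%:M 0 0.
Definition Ym : 'M[k]_(n + n) := block_mx 0 Nsh 0 0.
Definition e0 : 'rV[k]_n := delta_mx 0 ord0.

Lemma mulX (a b : 'rV[k]_n) : row_mx a b *m Xm = row_mx 0 a.
Proof. by rewrite mul_row_block !mulmx0 mulmx1 !addr0. Qed.
Lemma mulY (a b : 'rV[k]_n) : row_mx a b *m Ym = row_mx 0 (a *m Nsh).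
Proof. by rewrite mul_row_block !mulmx0 !addr0. Qed.

Lemma XX : Xm *m Xm = 0.
Proof. by rewrite mulmx_block !mulmx0 !mul0mx !addr0 block_mx0. Qed.
Lemma XY : Xm *m Ym = 0.
Proof. by rewrite mulmx_block !mulmx0 !mul0mx !addr0 block_mx0. Qed.
Lemma YX : Ym *m Xm = 0.
Proof. by rewrite mulmx_block !mulmx0 !mul0mx !addr0 block_mx0. Qed.
Lemma YY : Ym *m Ym = 0.
Proof. by rewrite mulmx_block !mulmx0 !mul0mx !addr0 block_mx0. Qed.

Lemma mulN_coef (b : 'rV[k]_n) (i j : 'I_n) : (j : nat) = i.+1 -> (b *m Nsh) 0 i = b 0 j.
Proof.
move=> ej; rewrite !mxE (bigD1 j) //= mxE ej eqxx mulr1 big1 ?addr0 // => l nl.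
rewrite mxE; case: eqP => [el|]; last by rewrite mulr0.
by case/eqP: nl; apply: val_inj; rewrite /= el ej.
Qed.

Lemma mulN_zero (b : 'rV[k]_n) (i : 'I_n) :
  (forall j : 'I_n, (j : nat) = i.+1 -> b 0 j = 0) -> (b *m Nsh) 0 i = 0.
Proof.
move=> h; rewrite !mxE big1 // => l _; rewrite mxE.
by case: eqP => [el|]; [rewrite h ?mul0r | rewrite mulr0].
Qed.

Section Socle.
Variable P : 'rV[k]_n -> Prop.
Hypothesis PN : forall b, P b -> P (b *m Nsh).
Hypothesis PZ : forall c b, P b -> P (c *: b).

Lemma claim1 t : (t < n)%N -> forall b, P b -> (forall i : 'I_n, (t < i)%N -> b 0 i = 0) ->
  P (b 0 (inord t) *: e0).
Proof.
elim: t => [|t IH] ht b Pb hb.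
  suff -> : b 0 (inord 0) *: e0 = b by [].
  apply/rowP => j; rewrite !mxE eqxx /=.
  case: (eqVneq j ord0) => [->|nj].
    rewrite mulr1; congr (b 0 _); apply: val_inj; by rewrite /= inordK.
  by rewrite mulr0 hb // lt0n; move: nj; apply: contra => /eqP h; apply/eqP/val_inj.
have := IH (ltnW ht) _ (PN Pb).
rewrite (@mulN_coef _ _ (inord t.+1)); last by rewrite /= !inordK // ltnW.
apply => i hi; apply: mulN_zero => j ej; apply: hb; by rewrite ej.
Qed.

Lemma claim2 t : (t < n)%N -> forall b, P b -> b != 0 ->
  (forall i : 'I_n, (t < i)%N -> b 0 i = 0) -> P e0.
Proof.
have scal : forall c, c != 0 -> P (c *: e0) -> P e0.
  by move=> c nc h; have := PZ c^-1 h; rewrite scalerA mulVf // scale1r.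
elim: t => [|t IH] ht b Pb nb hb.
  apply: (scal (b 0 (inord 0))); last exact: claim1.
  apply: contra nb => /eqP h0; apply/eqP/rowP => j; rewrite mxE.
  case: (eqVneq j ord0) => [->|nj].
    rewrite -h0; congr (b 0 _); apply: val_inj; by rewrite /= inordK.
  by rewrite hb // lt0n; move: nj; apply: contra => /eqP h; apply/eqP/val_inj.
case: (eqVneq (b 0 (inord t.+1)) 0) => h.
  apply: (IH (ltnW ht) b) => // i hi.
  case: (ltngtP t.+1 i) => [hi'|hi'|ei]; first exact: hb.
    by rewrite ltnS leqNgt hi in hi'.
  rewrite -h; congr (b 0 _); apply: val_inj; by rewrite /= inordK.
exact: (scal _ h (claim1 ht Pb hb)).
Qed.

Lemma socle b : P b -> b != 0 -> P e0.
Proof. move=> Pb nb; apply: (@claim2 m _ b) => // i; by rewrite ltnNge -ltnS ltn_ord. Qed.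
End Socle.

Lemma e0_neq0 : e0 != 0.
Proof. apply/eqP => /rowP /(_ ord0); rewrite !mxE eqxx /=; exact/eqP/oner_neq0. Qed.

Lemma indecomp (U W : 'M[k]_(n + n)) :
  (U *m Xm <= U)%MS -> (U *m Ym <= U)%MS ->
  (W *m Xm <= W)%MS -> (W *m Ym <= W)%MS ->
  (U :&: W == (0 : 'M[k]_(n+n)))%MS -> (U + W == (1%:M : 'M[k]_(n+n)))%MS ->
  (U == (0 : 'M[k]_(n+n)))%MS \/ (W == (0 : 'M[k]_(n+n)))%MS.
Proof.
move=> UX UY WX WY /andP[cap _] /andP[_ sum].
have disj (v : 'rV[k]_(n + n)) : (v <= U)%MS -> (v <= W)%MS -> v = 0.
  move=> vU vW; apply/eqP; rewrite -submx0; apply: submx_trans cap.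
  by rewrite sub_capmx vU vW.
have dec (v : 'rV[k]_(n + n)) : exists u w, [/\ (u <= U)%MS, (w <= W)%MS & v = u + w].
  have : (v <= U + W)%MS by apply: submx_trans sum; exact: submx1.
  case/sub_addsmxP => [[x y]] /= ->; exists (x *m U), (y *m W); split => //; exact: submxMl.
have clos (A : 'M[k]_(n+n)) (Z : 'M[k]_(n+n)) : (A *m Z <= A)%MS ->
    forall v : 'rV_(n+n), (v <= A)%MS -> (v *m Z <= A)%MS.
  by move=> AZ v vA; apply: submx_trans AZ; exact: submxMr.
have cloN (A B : 'M[k]_(n+n)) : (A *m Xm <= A)%MS -> (A *m Ym <= A)%MS ->
    (B *m Xm <= B)%MS -> (forall v : 'rV_(n+n), (v <= A)%MS -> (v <= B)%MS -> v = 0) ->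
    (forall v : 'rV_(n+n), exists u w, [/\ (u <= A)%MS, (w <= B)%MS & v = u + w]) ->
    forall b : 'rV_n, (row_mx 0 b <= A)%MS -> (row_mx 0 (b *m Nsh) <= A)%MS.
  move=> AX AY BX dAB dcAB b hb.
  have [u [w [uA wB e]]] := dcAB (row_mx b 0).
  have e2 : row_mx 0 b = u *m Xm + w *m Xm by rewrite -mulmxDl -e mulX.
  have w0 : w *m Xm = 0.
    apply: dAB; last exact: (clos _ _ BX _ wB).
    have -> : w *m Xm = row_mx 0 b - u *m Xm by rewrite e2 addrC addKr.
    by rewrite addmx_sub // -scaleN1r scalemx_sub // (clos _ _ AX).
  move: e2; rewrite w0 addr0 -(hsubmxK u) mulX => /eq_row_mx [_ ->].
  by rewrite -(mulY _ (rsubmx u)) hsubmxK (clos _ _ AY).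
have PZ (A : 'M[k]_(n+n)) c (b : 'rV_n) : (row_mx 0 b <= A)%MS -> (row_mx 0 (c *: b) <= A)%MS.
  by move=> h; rewrite -(scaler0 _ c) -scale_row_mx scalemx_sub.
have zero (A : 'M[k]_(n+n)) : (A *m Xm <= A)%MS ->
    (forall b : 'rV_n, (row_mx 0 b <= A)%MS -> b = 0) -> (A == (0 : 'M[k]_(n+n)))%MS.
  move=> AX h; apply/andP; split; last exact: sub0mx.
  rewrite submx0; apply/eqP/row_matrixP => i.
  rewrite row0.
  have ri := row_sub i A; have := clos _ _ AX _ ri.
  rewrite -(hsubmxK (row i A)) mulX => /h l0.
  by rewrite l0 (h (rsubmx (row i A))) ?row_mx0 // -l0 hsubmxK.
have cU := cloN U W UX UY WX disj dec.
have cW := cloN W U WX WY UX (fun v a b => disj v b a)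
   (fun v => let: ex_intro u (ex_intro w (And3 a b c)) := dec v in
            ex_intro _ w (ex_intro _ u (And3 b a (etrans c (addrC _ _))))).
case: (classic (exists b : 'rV[k]_n, b != 0 /\ (row_mx 0 b <= U)%MS)) => [[b [nb bU]]|nU].
  right; apply: zero => // c cW0; apply/eqP; apply: contraT => nc.
  have := disj (row_mx 0 e0).
  have hU := @socle (fun b : 'rV[k]_n => row_mx 0 b <= U)%MS (cU) (@PZ U) b bU nb.
  have hW := @socle (fun b : 'rV[k]_n => row_mx 0 b <= W)%MS (cW) (@PZ W) c cW0 nc.
  move=> /(_ hU hW) /eqP; rewrite -row_mx0 => /eqP/eq_row_mx [_ /eqP].
  by rewrite (negbTE e0_neq0).
left; apply: zero => // b bU; apply/eqP; apply: contraT => nb; case: nU; by exists b.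
Qed.

End Mx.

Section Rho.
Variables (M : finType) (mul : M -> M -> M) (one : M) (k : fieldType) (m : nat) (p q : M).
Hypothesis HM : is_monoid mul one.
Hypothesis Hp : mirreducible mul one p.
Hypothesis Hq : mirreducible mul one q.
Hypothesis Hpq : ~ massociates mul one p q.
Local Notation n := m.+1.
Local Notation unit := (munit mul one).
Local Notation assoc := (massociates mul one).

Definition rho (x : M) : 'M[k]_(n + n) :=
  if excluded_middle_informative (unit x) then 1%:M
  else if excluded_middle_informative (assoc x p) then Xm k m
  else if excluded_middle_informative (assoc x q) then Ym k m
  else 0%R.

Lemma rho_ext x y : (unit x <-> unit y) -> (assoc x p <-> assoc y p) ->
  (assoc x q <-> assoc y q) -> rho x = rho y.
Proof.
move=> h1 h2 h3; rewrite /rho.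
by repeat (case: excluded_middle_informative; intro); simpl; try reflexivity; tauto.
Qed.

Lemma rho_nonunit x : ~ unit x -> rho x = Xm k m \/ rho x = Ym k m \/ rho x = 0%R.
Proof. move=> nx; rewrite /rho; by repeat (case: excluded_middle_informative; intro); simpl; tauto. Qed.

Lemma rho_unit x : unit x -> rho x = 1%:M.
Proof. by move=> ux; rewrite /rho; case: excluded_middle_informative. Qed.

Lemma rho_zero x : ~ unit x -> ~ assoc x p -> ~ assoc x q -> rho x = 0%R.
Proof. by move=> h1 h2 h3; rewrite /rho; repeat (case: excluded_middle_informative; intro); simpl; tauto. Qed.

Lemma rho_ok : is_mrepr mul one rho.
Proof.
split.
  by rewrite /rho; case: excluded_middle_informative => // []; case; exact: unit_one.
move=> a b.
case: (classic (unit a)) => ua; case: (classic (unit b)) => ub.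
- by rewrite !rho_unit ?mul1mx //; apply: unit_mul.
- have nab : ~ unit (mul a b) by move/(unit_mul_inv HM) => [].
  rewrite (rho_unit ua) mulmx1.
  apply: rho_ext; first by split => h; [case: nab | case: ub].
  exact (assoc_mull HM b p ua). exact (assoc_mull HM b q ua).
- have nab : ~ unit (mul a b) by move/(unit_mul_inv HM) => [].
  rewrite (rho_unit ub) mul1mx.
  apply: rho_ext; first by split => h; [case: nab | case: ua].
  exact (assoc_mulr HM a p ub). exact (assoc_mulr HM a q ub).
- have nab : ~ unit (mul a b) by move/(unit_mul_inv HM) => [].
  have -> : rho (mul a b) = 0%R.
    apply: rho_zero => // h; [exact: (irr_assoc_prod HM Hp ua ub h) | exact: (irr_assoc_prod HM Hq ua ub h)].
  case: (rho_nonunit ua) => [->|[->|->]]; case: (rho_nonunit ub) => [->|[->|->]];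
    by rewrite ?XX ?XY ?YX ?YY ?mulmx0 ?mul0mx.
Qed.

Lemma rho_X x : ~ unit x -> assoc x p -> rho x = Xm k m.
Proof. by move=> h1 h2; rewrite /rho; repeat (case: excluded_middle_informative; intro); simpl; tauto. Qed.
Lemma rho_Y x : ~ unit x -> ~ assoc x p -> assoc x q -> rho x = Ym k m.
Proof. by move=> h1 h2 h3; rewrite /rho; repeat (case: excluded_middle_informative; intro); simpl; tauto. Qed.

Lemma rho_p : rho p = Xm k m.
Proof. apply: rho_X; [by case: Hp | exact: assoc_refl]. Qed.

Lemma rho_q : rho q = Ym k m.
Proof.
apply: rho_Y; [by case: Hq | move=> h; apply: Hpq; exact: assoc_sym | exact: assoc_refl].
Qed.

Definition rhoR : mrepr k mul one := MRepr rho_ok.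

Lemma rhoR_indec : mindecomposable rhoR.
Proof.
split => //= U W sU sW.
have := sU p; have := sU q; have := sW p; have := sW q.
rewrite /= rho_p rho_q => WY WX UY UX.
exact: indecomp.
Qed.
End Rho.

Lemma dim_iso (k : fieldType) (M : Type) (mul : M -> M -> M) (one : M) (r s : mrepr k mul one) :
  mrepr_iso r s -> mr_dim r = mr_dim s.
Proof. by move=> [P [/eqP h1 [/eqP h2 _]]]; rewrite -h1 h2. Qed.

Lemma nth_le_sumn (s : seq nat) i : (i < size s)%N -> (nth 0 s i <= sumn s)%N.
Proof.
elim: s i => [|x s IH] [|i] //= h; first exact: leq_addr.
by apply: leq_trans (IH _ h) _; exact: leq_addl.
Qed.

Theorem corollary4 (M : finType) (mul : M -> M -> M) (one : M) (k : fieldType) :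
  is_monoid mul one ->
  forall p q : M, mirreducible mul one p -> mirreducible mul one q ->
    ~ massociates mul one p q ->
    infinite_rep_type k mul one.
Proof.
move=> HM p q Hp Hq Hpq s.
set d := sumn (map (@mr_dim k M mul one) s).
exists (rhoR k d HM Hp Hq); split; first exact: rhoR_indec.
move=> i hi iso; have e := dim_iso iso; simpl in e.
have := nth_le_sumn (s := map (@mr_dim k M mul one) s) (i := i).
rewrite size_map (nth_map (rhoR k d HM Hp Hq)) // => /(_ hi).
rewrite -e -/d addSn ltnNge leq_addr. done. Qed.
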